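(* Assume $\mathfrak p=\mathfrak p_1\oplus\mathfrak p_2$ with $\mathfrak p_1,\mathfrak p_2$ $\mathrm{Ad}(K)$-irreducible and inequivalent, that $g_B$ is Einstein, $d_1=d_2$, $[111]=[222]$ and $[112]=[122]>0$. Then $g_B$ is a global maximum of $\mathrm{scal}|_{\mathcal M_1^G}$ if and only if $g_B$ is the unique $G$-invariant Einstein metric on $G/K$ up to scaling. Otherwise $g_B$ is a local minimum of $\mathrm{scal}|_{\mathcal M_1^G}$ and there exist exactly two other unit-volume $G$-invariant Einstein metrics, both local maxima of $\mathrm{scal}|_{\mathcal M_1^G}$, at least one of them a global maximum.
   Context: Let $G$ be a compact connected semisimple Lie group with Lie algebra $\mathfrak g$ and Killing form $B$, $K\subset G$ a closed subgroup with Lie algebra $\mathfrak k$, $\mathfrak p$ the $B$-orthogonal complement of $\mathfrak k$, and $g_B$ the standard metric on $G/K$, given on $\mathfrak p$ by $\langle\cdot,\cdot\rangle=-B|_{\mathfrak p\times\mathfrak p}$. For a $\langle\cdot,\cdot\rangle$-orthogonal decomposition $\mathfrak p=\mathfrak p_1\oplus\dots\oplus\mathfrak p_r$ into $\mathrm{Ad}(K)$-invariant subspaces with $d_i=\dim\mathfrak p_i$, the structural constants are $[ijk]=\sum_{\alpha,\beta,\gamma}\langle[X^i_\alpha,X^j_\beta],X^k_\gamma\rangle^2$, where $\{X^i_\alpha\}$ is an orthonormal basis of $\mathfrak p_i$; they are symmetric in $i,j,k$. When $\mathfrak p=\mathfrak p_1\oplus\mathfrak p_2$ with inequivalent irreducible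 summands, every $G$-invariant metric is of the form $x_1\langle\cdot,\cdot\rangle|_{\mathfrak p_1}+x_2\langle\cdot,\cdot\rangle|_{\mathfrak p_2}$ with $x_1,x_2>0$. $\mathcal M_1^G$ denotes the set of unit-volume $G$-invariant metrics (volume normalized as that of $g_B$) and $\mathrm{scal}$ the scalar curvature function on it; its critical points are exactly the $G$-invariant Einstein metrics. *)

(* Defs.v *)
From Stdlib Require Import Reals.
Open Scope R_scope.

(* Index set {1,2} of the two Ad(K)-irreducible summands p_1, p_2. *)
Inductive idx := i1 | i2.

Definition sum_idx (f : idx -> R) : R := f i1 + f i2.

(* A G-invariant metric x_1 <,>|p1 + x_2 <,>|p2 is encoded by x : idx -> R
   with x i > 0 (every invariant metric has this form since p1, p2 are
   irreducible and inequivalent). *)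
Definition metric_pos (x : idx -> R) : Prop := forall i, 0 < x i.

Definition meq (x y : idx -> R) : Prop := x i1 = y i1 /\ x i2 = y i2.

Definition gB : idx -> R := fun _ => 1.

Definition sc_symmetric (sc : idx -> idx -> idx -> R) : Prop :=
  forall i j k, sc i j k = sc j i k /\ sc i j k = sc i k j.

(* Ricci eigenvalues (Park--Sakane / Wang--Ziller formula, with b_k = 1 since
   <,> = -B):  Ric = r_k * x_k <,> on p_k, where
   r_k = 1/(2 x_k) + 1/(4 d_k) sum_{i,j} [ijk] x_k/(x_i x_j)
                   - 1/(2 d_k) sum_{i,j} [kij] x_j/(x_k x_i). *)
Definition ricci (d : idx -> nat) (sc : idx -> idx -> idx -> R)
  (x : idx -> R) (k : idx) : R :=
  / (2 * x k)
  + / (4 * INR (d k)) *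
      sum_idx (fun i => sum_idx (fun j => sc i j k * x k / (x i * x j)))
  - / (2 * INR (d k)) *
      sum_idx (fun i => sum_idx (fun j => sc k i j * x j / (x k * x i))).

Definition scal (d : idx -> nat) (sc : idx -> idx -> idx -> R)
  (x : idx -> R) : R :=
  sum_idx (fun k => INR (d k) * ricci d sc x k).

(* x is a G-invariant Einstein metric: Ric = lambda g, i.e. r_1 = r_2 *)
Definition einstein (d : idx -> nat) (sc : idx -> idx -> idx -> R)
  (x : idx -> R) : Prop :=
  metric_pos x /\ ricci d sc x i1 = ricci d sc x i2.

Definition unit_volume (d : idx -> nat) (x : idx -> R) : Prop :=
  metric_pos x /\ x i1 ^ d i1 * x i2 ^ d i2 = 1.

Definition mdist (x y : idx -> R) : R :=
  Rmax (Rabs (x i1 - y i1)) (Rabs (x i2 - y i2)).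

Definition local_max_M1 (d : idx -> nat) (f : (idx -> R) -> R)
  (x : idx -> R) : Prop :=
  unit_volume d x /\
  exists eps, 0 < eps /\
    forall y, unit_volume d y -> mdist x y < eps -> f y <= f x.

Definition local_min_M1 (d : idx -> nat) (f : (idx -> R) -> R)
  (x : idx -> R) : Prop :=
  unit_volume d x /\
  exists eps, 0 < eps /\
    forall y, unit_volume d y -> mdist x y < eps -> f x <= f y.

Definition global_max_M1 (d : idx -> nat) (f : (idx -> R) -> R)
  (x : idx -> R) : Prop :=
  unit_volume d x /\ forall y, unit_volume d y -> f y <= f x.

Definition unique_einstein_up_to_scaling (d : idx -> nat)
  (sc : idx -> idx -> idx -> R) (x : idx -> R) : Prop :=
  einstein d sc x /\
  forall y, einstein d sc y -> exists s, 0 < s /\ forall i, y i = s * x i.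

(* Main.v *)
Require Import Defs.
From Stdlib Require Import Reals Lra Psatz.
Open Scope R_scope.

Lemma uv_prod d x : (0 < d i1)%nat -> d i2 = d i1 -> unit_volume d x -> x i1 * x i2 = 1.
Proof.
  intros hd h12 [hp hv]. rewrite h12, <- Rpow_mult_distr in hv.
  assert (0 < x i1 * x i2) by (apply Rmult_lt_0_compat; apply hp).
  destruct (Rtotal_order (x i1 * x i2) 1) as [h|[h|h]]; auto.
  - pose proof (pow_lt_1_compat (x i1 * x i2) (d i1) ltac:(lra) hd). lra.
  - pose proof (Rlt_pow_R1 _ _ h hd). lra.
Qed.

Section S.
Variables (d : idx -> nat) (sc : idx -> idx -> idx -> R) (a b : R).
Hypotheses (e111 : sc i1 i1 i1 = a) (e222 : sc i2 i2 i2 = a)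
 (e112 : sc i1 i1 i2 = b) (e121 : sc i1 i2 i1 = b) (e211 : sc i2 i1 i1 = b)
 (e122 : sc i1 i2 i2 = b) (e212 : sc i2 i1 i2 = b) (e221 : sc i2 i2 i1 = b)
 (hN : d i2 = d i1) (hNp : 0 < INR (d i1)).

Lemma ricci_diff x : metric_pos x ->
  ricci d sc x i1 - ricci d sc x i2 =
  (x i1 - x i2) * (3*b*(x i1^2 + x i2^2) + (6*b - 4*(INR (d i1)/2 - a/4 + b/4))*x i1*x i2)
   / (4*INR (d i1)*x i1^2*x i2^2).
Proof.
  intros hp. pose proof (hp i1); pose proof (hp i2).
  unfold ricci, sum_idx. rewrite e111, e222, e112, e121, e211, e122, e212, e221, hN.
  field. repeat split; lra.
Qed.

Lemma scal_eq x : metric_pos x ->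
  scal d sc x = (INR (d i1)/2 - a/4 + b/4 - 3*b/4) * (/ x i1 + / x i2)
     - b/4 * (x i1 / x i2^2 + x i2 / x i1^2).
Proof.
  intros hp. pose proof (hp i1); pose proof (hp i2).
  unfold scal, ricci, sum_idx. rewrite e111, e222, e112, e121, e211, e122, e212, e221, hN.
  field. repeat split; lra.
Qed.
End S.

Lemma lemma6p2_core (d : idx -> nat) (sc : idx -> idx -> idx -> R)
  (hd : forall i, (0 < d i)%nat)
  (hsym : sc_symmetric sc)
  (hd12 : d i1 = d i2)
  (h111 : sc i1 i1 i1 = sc i2 i2 i2)
  (h112 : sc i1 i1 i2 = sc i1 i2 i2)
  (hpos : 0 < sc i1 i1 i2) :
  (global_max_M1 d (scal d sc) gB <-> unique_einstein_up_to_scaling d sc gB) /\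
  (~ global_max_M1 d (scal d sc) gB ->
     local_min_M1 d (scal d sc) gB /\
     exists y z : idx -> R,
       unit_volume d y /\ einstein d sc y /\
       unit_volume d z /\ einstein d sc z /\
       ~ meq y gB /\ ~ meq z gB /\ ~ meq y z /\
       (forall w, unit_volume d w -> einstein d sc w ->
          meq w gB \/ meq w y \/ meq w z) /\
       local_max_M1 d (scal d sc) y /\ local_max_M1 d (scal d sc) z /\
       (global_max_M1 d (scal d sc) y \/ global_max_M1 d (scal d sc) z)).
Proof.
  pose proof (hd i1) as hd1. symmetry in hd12.
  assert (hNp : 0 < INR (d i1)) by (apply lt_0_INR; exact hd1).
  set (N := INR (d i1)) in *.
  set (a := sc i1 i1 i1) in *. set (b := sc i1 i1 i2) in *.
  assert (e222 : sc i2 i2 i2 = a) by (unfold a; auto).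
  assert (e121 : sc i1 i2 i1 = b) by (unfold b; symmetry; apply (hsym i1 i1 i2)).
  assert (e211 : sc i2 i1 i1 = b) by (rewrite <- e121; symmetry; apply (hsym i1 i2 i1)).
  assert (e122 : sc i1 i2 i2 = b) by (unfold b; auto).
  assert (e212 : sc i2 i1 i2 = b) by (rewrite <- e122; symmetry; apply (hsym i1 i2 i2)).
  assert (e221 : sc i2 i2 i1 = b) by (rewrite <- e212; symmetry; apply (hsym i2 i1 i2)).
  set (C := N/2 - a/4 + b/4).
  assert (F1 : forall w, unit_volume d w -> w i1 * w i2 = 1 /\
     scal d sc w = C*(w i1 + w i2) - b/4*(w i1 + w i2)^3).
  { intros w hw. pose proof (uv_prod d w hd1 hd12 hw) as hp. split; auto.
    destruct hw as [hw _]. pose proof (hw i1); pose proof (hw i2).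
    rewrite (scal_eq d sc a b) by auto. unfold C.
    assert (e : w i2 = / w i1) by (apply (Rmult_eq_reg_l (w i1)); [rewrite hp; field|]; lra).
    rewrite e. unfold N. field. lra. }
  assert (F2 : forall w, metric_pos w -> (einstein d sc w <->
     (w i1 - w i2)*(3*b*(w i1^2 + w i2^2) + (6*b - 4*C)*w i1*w i2) = 0)).
  { intros w hw. pose proof (hw i1); pose proof (hw i2).
    pose proof (ricci_diff d sc a b ltac:(reflexivity) e222 ltac:(reflexivity) e121 e211 e122 e212 e221 hd12 hNp w hw) as R.
    fold N C in R.
    assert (0 < 4 * N * w i1 ^ 2 * w i2 ^ 2) by (repeat apply Rmult_lt_0_compat; try apply pow_lt; lra).
    unfold einstein; split.
    - intros [_ h]. rewrite h, Rminus_diag in R.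
      symmetry in R. apply Rmult_integral in R as [R|R]; auto.
      pose proof (Rinv_neq_0_compat _ (Rgt_not_eq _ _ H1)). contradiction.
    - intros h. split; auto. rewrite h in R. unfold Rdiv in R. rewrite Rmult_0_l in R. lra. }
  assert (gBuv : unit_volume d gB).
  { split. intros i; unfold gB; lra. unfold gB. rewrite !pow1. lra. }
  assert (sgB : scal d sc gB = 2*C - 2*b).
  { destruct (F1 gB gBuv) as [_ ->]. unfold gB. lra. }
  assert (A : C <= 3*b -> global_max_M1 d (scal d sc) gB).
  { intros hC. split; auto. intros w hw. destruct (F1 w hw) as [hp ->].
    rewrite sgB. destruct hw as [hw _]. pose proof (hw i1); pose proof (hw i2).
    set (u := w i1 + w i2). assert (hu : u >= 2) by (unfold u; pose proof (pow2_ge_0 (w i1 - w i2)); nra).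
    assert (u^2+2*u+4 - 12 >= 0) by nra.
    assert (0 <= b*(u^2+2*u+4 - 12)) by (apply Rmult_le_pos; lra).
    assert (b/4*(u^2+2*u+4) - C >= 0) by lra.
    assert (0 <= (u-2)*(b/4*(u^2+2*u+4) - C)) by (apply Rmult_le_pos; lra). nra. }
  assert (B : C <= 3*b -> unique_einstein_up_to_scaling d sc gB).
  { intros hC. split. apply F2. apply gBuv. unfold gB. ring.
    intros y hy. pose proof (proj1 hy) as hp. pose proof (hp i1); pose proof (hp i2).
    apply (F2 y hp) in hy. exists (y i1). split; auto.
    assert (y i1 = y i2).
    { destruct (Req_dec (y i1) (y i2)); auto. exfalso.
      apply Rmult_integral in hy as [h|h]; [lra|].
      assert (0 < (y i1 - y i2)*(y i1 - y i2)) by (apply Rsqr_pos_lt; lra).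
      assert (0 <= (12*b - 4*C)*(y i1 * y i2)) by (apply Rmult_le_pos; nra).
      nra. }
    intros []; unfold gB; lra. }
  destruct (Rle_or_lt C (3*b)) as [hC|hC].
  { split. split; intros; auto. intros h; exfalso; auto. }
  assert (hk : 4 < 4*C/(3*b)).
  { apply (Rmult_lt_reg_r (3*b)); [lra|]. field_simplify; lra. }
  set (u0 := sqrt (4*C/(3*b))).
  assert (hu0 : u0 * u0 = 4*C/(3*b)) by (apply sqrt_sqrt; lra).
  assert (hu0p : 0 < u0) by (apply sqrt_lt_R0; lra).
  assert (hu02 : 2 < u0) by nra.
  assert (hCu : C = 3*b*(u0*u0)/4) by (rewrite hu0; field; lra).
  set (D := sqrt (u0*u0 - 4)).
  assert (hD : D * D = u0*u0 - 4) by (apply sqrt_sqrt; lra).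
  assert (hDp : 0 < D) by (apply sqrt_lt_R0; lra).
  set (p := (u0 + D)/2). set (q := (u0 - D)/2).
  assert (hpq : p * q = 1) by (unfold p, q; nra).
  assert (hpp : 0 < p) by (unfold p; lra).
  assert (hqp : 0 < q) by nra.
  assert (hpsq : p + q = u0) by (unfold p, q; lra).
  assert (hpneq : p <> q) by (unfold p, q; lra).
  set (y := fun i => match i with i1 => p | i2 => q end).
  set (z := fun i => match i with i1 => q | i2 => p end).
  assert (ypos : metric_pos y) by (intros []; simpl; lra).
  assert (zpos : metric_pos z) by (intros []; simpl; lra).
  assert (yuv : unit_volume d y).
  { split; auto. simpl. rewrite hd12, <- Rpow_mult_distr, hpq. apply pow1. }
  assert (zuv : unit_volume d z).
  { split; auto. simpl. rewrite hd12, <- Rpow_mult_distr, Rmult_comm, hpq. apply pow1. }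
  assert (key : 3*b*(p^2+q^2) + (6*b-4*C)*p*q = 0).
  { assert (p^2+q^2 = u0*u0 - 2) by (rewrite <- hpsq; nra). rewrite H. replace ((6*b-4*C)*p*q) with ((6*b-4*C)*(p*q)) by ring. rewrite hpq, hCu. lra. }
  assert (yE : einstein d sc y).
  { apply F2; auto. unfold y; cbv beta iota. rewrite key. ring. }
  assert (zE : einstein d sc z).
  { apply F2; auto. unfold z; cbv beta iota. replace (3 * b * (q ^ 2 + p ^ 2) + (6 * b - 4 * C) * q * p) with 0 by lra. ring. }
  assert (sy : scal d sc y = C*u0 - b/4*u0^3) by (rewrite (proj2 (F1 y yuv)); simpl; rewrite hpsq; ring).
  assert (sz : scal d sc z = C*u0 - b/4*u0^3) by (rewrite (proj2 (F1 z zuv)); simpl; rewrite Rplus_comm, hpsq; ring).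
  assert (gy : global_max_M1 d (scal d sc) y).
  { split; auto. intros w hw. destruct (F1 w hw) as [hp ->]. rewrite sy.
    destruct hw as [hw _]. pose proof (hw i1); pose proof (hw i2).
    set (u := w i1 + w i2). assert (u > 0) by (unfold u; lra).
    assert (0 <= b/4*((u0-u)*(u0-u))*(2*u0+u)).
    { apply Rmult_le_pos; [apply Rmult_le_pos; [lra| apply Rle_0_sqr]| lra]. }
    rewrite hCu. nra. }
  assert (gz : global_max_M1 d (scal d sc) z).
  { split; auto. intros w hw. rewrite sz, <- sy. apply gy, hw. }
  assert (ngB : ~ global_max_M1 d (scal d sc) gB).
  { intros [_ h]. specialize (h y yuv). rewrite sy, sgB, hCu in h.
    assert (0 < b/4*((u0-2)*(u0-2))*(2*u0+2)).
    { apply Rmult_lt_0_compat; [apply Rmult_lt_0_compat; [lra| apply Rsqr_pos_lt; lra]| lra]. }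
    rewrite hCu in *. nra. }
  assert (nU : ~ unique_einstein_up_to_scaling d sc gB).
  { intros [_ h]. destruct (h y yE) as [s [_ hs]]. pose proof (hs i1); pose proof (hs i2).
    simpl in *. unfold gB in *. lra. }
  split. { split; intros; exfalso; auto. }
  intros _. split.
  { split; auto. exists ((u0-2)/2). split; [lra|]. intros w hw hdist.
    destruct (F1 w hw) as [hp ->]. rewrite sgB.
    destruct hw as [hw _]. pose proof (hw i1); pose proof (hw i2).
    unfold mdist, gB in hdist.
    pose proof (Rle_lt_trans _ _ _ (Rmax_l _ _) hdist) as h1.
    pose proof (Rle_lt_trans _ _ _ (Rmax_r _ _) hdist) as h2.
    apply Rabs_def2 in h1; apply Rabs_def2 in h2.
    set (u := w i1 + w i2). assert (hu : u >= 2) by (unfold u; pose proof (pow2_ge_0 (w i1 - w i2)); nra).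
    assert (hu1 : u <= u0) by (unfold u; lra).
    assert (u*u <= u0*u0) by nra.
    assert (u^2+2*u+4 <= 3*(u0*u0)) by nra.
    assert (0 <= b*(3*(u0*u0) - (u^2+2*u+4))) by (apply Rmult_le_pos; lra).
    assert (0 <= C - b/4*(u^2+2*u+4)) by (rewrite hCu; lra).
    assert (0 <= (u-2)*(C - b/4*(u^2+2*u+4))) by (apply Rmult_le_pos; lra). nra. }
  exists y, z. split; auto. split; auto. split; auto. split; auto.
  assert (p <> 1) by (intro; subst; nra).
  assert (q <> 1) by (intro; nra).
  split. { intros [h _]; simpl in h; unfold gB in h; auto. }
  split. { intros [h _]; simpl in h; unfold gB in h; auto. }
  split. { intros [h _]; simpl in h; auto. }
  split.
  { intros w hw hwE. destruct (F1 w hw) as [hp _]. destruct hw as [hw _].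
    pose proof (hw i1); pose proof (hw i2).
    apply (F2 w hw) in hwE. apply Rmult_integral in hwE as [h|h].
    - left. assert (w i1 = 1) by nra. split; unfold gB; lra.
    - right. replace ((6 * b - 4 * C) * w i1 * w i2) with ((6 * b - 4 * C) * (w i1 * w i2)) in h by ring. rewrite hp in h.
      assert (hs : (w i1 + w i2)*(w i1 + w i2) = u0*u0) by (rewrite hCu in h; nra).
      assert (hs2 : w i1 + w i2 = u0) by nra.
      assert ((w i1 - p)*(w i1 - q) = 0) by nra.
      apply Rmult_integral in H3 as [h3|h3].
      + left. split; simpl; nra.
      + right. split; simpl; nra. }
  split. { split; auto. exists 1. split; [lra|]. intros; apply gy; auto. }
  split. { split; auto. exists 1. split; [lra|]. intros; apply gz; auto. }
  left; auto.
Qed.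
Theorem lemma6p2 (d : idx -> nat) (sc : idx -> idx -> idx -> R)
  (hd : forall i, (0 < d i)%nat)
  (hsym : sc_symmetric sc)
  (hnn : forall i j k, 0 <= sc i j k)
  (hE : einstein d sc gB)
  (hd12 : d i1 = d i2)
  (h111 : sc i1 i1 i1 = sc i2 i2 i2)
  (h112 : sc i1 i1 i2 = sc i1 i2 i2)
  (hpos : 0 < sc i1 i1 i2) :
  (global_max_M1 d (scal d sc) gB <-> unique_einstein_up_to_scaling d sc gB) /\
  (~ global_max_M1 d (scal d sc) gB ->
     local_min_M1 d (scal d sc) gB /\
     exists y z : idx -> R,
       unit_volume d y /\ einstein d sc y /\
       unit_volume d z /\ einstein d sc z /\
       ~ meq y gB /\ ~ meq z gB /\ ~ meq y z /\
       (forall w, unit_volume d w -> einstein d sc w ->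
          meq w gB \/ meq w y \/ meq w z) /\
       local_max_M1 d (scal d sc) y /\ local_max_M1 d (scal d sc) z /\
       (global_max_M1 d (scal d sc) y \/ global_max_M1 d (scal d sc) z)).
Proof.
  intros. apply lemma6p2_core; auto.
Qed.
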